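(* Let $k$ be a natural number, $n=4k$, and let $|G\rangle$ be an $n$-qubit graph state whose graph has no isolated vertices. Let $\mathcal A$ be the set of stabilizers $S=(-1)^s\bigotimes_{i=1}^n\tau_i$ of $|G\rangle$ ($s\in\{0,1\}$) such that $\tau_i\in\{X,Y,Z\}$ for exactly $3k$ indices $i$ and $\tau_i=I$ for the remaining $k$ indices, and assume $\mathcal A\neq\emptyset$. Let $\rho=\mathcal E^{\otimes n}(|G\rangle\langle G|)$ with $\mathcal E$ the single-qubit depolarizing channel of error probability $p$. Then for every $S\in\mathcal A$, $F_{\rm est}:={\rm Tr}(\rho S)=(1-\tfrac43p)^{3k}$, and with $\tilde F:=(1-p)^{4k}$ (the fidelity $\langle G|\rho|G\rangle$ up to first order in $p$) one has $$0\le \tilde F-F_{\rm est}<\frac{2}{3k}\qquad\text{for all }0\le p\le 3/4.$$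
   Context: Graph state $|G\rangle=\big(\prod_{(i,j)\in E}CZ_{i,j}\big)|+\rangle^{\otimes n}$ with stabilizer generators $g_i=X_i\prod_{j:(i,j)\in E}Z_j$; a stabilizer is $S_\ell=\prod_i g_i^{\ell_i}$, $\ell\in\{0,1\}^n$, which equals $(-1)^s\bigotimes_{i=1}^n\tau_i$ with $\tau_i\in\{I,X,Y,Z\}$. The depolarizing channel is $\mathcal E(\cdot)=(1-p)(\cdot)+\frac p3[X(\cdot)X+Y(\cdot)Y+Z(\cdot)Z]$, applied independently to each qubit. *)

(* Defs.v *)
From mathcomp Require Import all_boot all_order all_algebra.
Set Implicit Arguments. Unset Strict Implicit. Unset Printing Implicit Defensive.
Import Order.TTheory GRing.Theory Num.Theory.
Local Open Scope ring_scope.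

Inductive pauli := PI | PX | PY | PZ.

Definition nonid (P : pauli) : bool := if P is PI then false else true.

Section Quantum.
Variable C : numClosedFieldType.

(* 2x2 Pauli matrices in the computational basis |false>=|0>, |true>=|1>:
   X = [[0,1],[1,0]], Y = [[0,-i],[i,0]], Z = [[1,0],[0,-1]]. *)
Definition pmat (P : pauli) (b c : bool) : C :=
  match P with
  | PI => (b == c)%:R
  | PX => (b != c)%:R
  | PY => if b == c then 0 else if b then 'i else - 'i
  | PZ => if b == c then (if b then -1 else 1) else 0
  end.

Variable n : nat.

Definition basis := {ffun 'I_n -> bool}.
Definition op := basis -> basis -> C.
Definition vec := basis -> C.

Definition idO : op := fun x y => (x == y)%:R.
Definition mulO (A B : op) : op := fun x z => \sum_(y : basis) A x y * B y z.
Definition trO (A : op) : C := \sum_(x : basis) A x x.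
Definition applyO (A : op) (v : vec) : vec := fun x => \sum_(y : basis) A x y * v y.

Definition tens (tau : 'I_n -> pauli) : op :=
  fun x y => \prod_(i < n) pmat (tau i) (x i) (y i).

Definition pauli_at (q : 'I_n) (P : pauli) : op :=
  tens (fun j => if j == q then P else PI).

Definition gen (e : rel 'I_n) (i : 'I_n) : op :=
  tens (fun j => if j == i then PX else if e i j then PZ else PI).

Definition stab (e : rel 'I_n) (l : 'I_n -> bool) : op :=
  \big[mulO/idO]_(i < n) (if l i then gen e i else idO).

Definition cz (i j : 'I_n) : op :=
  fun x y => (x == y)%:R * (if x i && x j then -1 else 1).

Definition plus_state : vec := fun _ => ((sqrtC 2)^-1) ^+ n.

(* |G> = (prod_{(i,j) in E} CZ_{ij}) |+>^n, each edge counted once (i<j) *)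
Definition graph_state (e : rel 'I_n) : vec :=
  applyO (\big[mulO/idO]_(i < n) \big[mulO/idO]_(j < n | (i < j)%N && e i j) cz i j)
         plus_state.

Definition proj (v : vec) : op := fun x y => v x * (v y)^*.

Definition depol1 (p : C) (q : 'I_n) (A : op) : op :=
  fun x y => (1 - p) * A x y
    + p / 3%:R * (mulO (mulO (pauli_at q PX) A) (pauli_at q PX) x y
               + mulO (mulO (pauli_at q PY) A) (pauli_at q PY) x y
               + mulO (mulO (pauli_at q PZ) A) (pauli_at q PZ) x y).

(* E^{(x) n}: the (commuting) single-qubit channels applied on every qubit *)
Definition depol_all (p : C) (A : op) : op := foldr (depol1 p) A (enum 'I_n).

Definition noisy_state (e : rel 'I_n) (p : C) : op := depol_all p (proj (graph_state e)).

Definition in_A (e : rel 'I_n) (m : nat) (S : op) : Prop :=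
  (exists l : 'I_n -> bool, S = stab e l) /\
  (exists (s : bool) (tau : 'I_n -> pauli),
      S = (fun x y => (-1) ^+ s * tens tau x y) /\
      #|[pred i : 'I_n | nonid (tau i)]| = m).

End Quantum.

(* Main.v *)
Require Import Defs.
From mathcomp Require Import all_boot all_order all_algebra.
From mathcomp Require Import ring zify.
From Stdlib Require Import FunctionalExtensionality.
Import Order.TTheory GRing.Theory Num.Theory.
Local Open Scope ring_scope.

Definition tensG {C : numClosedFieldType} {n : nat} (f : 'I_n -> bool -> bool -> C) : op C n :=
  fun x y => \prod_(i < n) f i (x i) (y i).
Definition m2 {C : numClosedFieldType} (a b : bool -> bool -> C) : bool -> bool -> C :=
  fun u v => \sum_(w : bool) a u w * b w v.

Lemma mulO_tensG (C : numClosedFieldType) n (f g : 'I_n -> bool -> bool -> C) :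
  mulO (tensG f) (tensG g) = tensG (fun i => m2 (f i) (g i)).
Proof.
apply: functional_extensionality => x; apply: functional_extensionality => z.
rewrite /mulO /tensG /m2 bigA_distr_bigA /=.
by apply: eq_bigr => y _; rewrite big_split.
Qed.

Lemma mulOA (C : numClosedFieldType) n (A B D : op C n) :
  mulO (mulO A B) D = mulO A (mulO B D).
Proof.
apply: functional_extensionality => x; apply: functional_extensionality => z.
rewrite /mulO.
under eq_bigr do rewrite mulr_suml.
rewrite exchange_big /=; apply: eq_bigr => w _.
rewrite mulr_sumr; apply: eq_bigr => y _; by rewrite mulrA.
Qed.

Lemma trO_comm (C : numClosedFieldType) n (A B : op C n) :
  trO (mulO A B) = trO (mulO B A).
Proof.
rewrite /trO /mulO exchange_big /=; apply: eq_bigr => x _.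
by apply: eq_bigr => y _; rewrite mulrC.
Qed.

Lemma trO_scale (C : numClosedFieldType) n (A B : op C n) c :
  trO (mulO A (fun x y => c * B x y)) = c * trO (mulO A B).
Proof.
rewrite /trO /mulO mulr_sumr; apply: eq_bigr => x _.
rewrite mulr_sumr; apply: eq_bigr => y _; by rewrite mulrCA.
Qed.

Lemma trO_lin (C : numClosedFieldType) n (A B1 B2 B3 T : op C n) a b :
  trO (mulO (fun x y => a * A x y + b * (B1 x y + B2 x y + B3 x y)) T) =
  a * trO (mulO A T) + b * (trO (mulO B1 T) + trO (mulO B2 T) + trO (mulO B3 T)).
Proof.
rewrite /trO /mulO !mulrDr !mulr_sumr -!big_split /=; apply: eq_bigr => x _.
rewrite !mulr_sumr -!big_split /=; apply: eq_bigr => y _; ring.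
Qed.

Definition comm_pt (P T : pauli) : bool :=
  match P, T with
  | PI, _ => true | _, PI => true
  | PX, PX => true | PY, PY => true | PZ, PZ => true
  | _, _ => false end.

Lemma m2_pauli (C : numClosedFieldType) (P T : pauli) (b c : bool) :
  m2 (m2 (pmat C P) (pmat C T)) (pmat C P) b c =
  (if comm_pt P T then 1 else -1) * pmat C T b c.
Proof.
have ii : ('i : C) * 'i = -1 by rewrite -expr2 sqrCi.
case: P; case: T; case: b; case: c; rewrite /m2 /= !big_bool /=;
  rewrite ?mul0r ?mulr0 ?mul1r ?mulr1 ?add0r ?addr0 ?mulN1r ?mulrN1 ?mulrN ?mulNr ?opprK ?ii //; ring.
Qed.

Lemma conjP (C : numClosedFieldType) n (q : 'I_n) (P : pauli) (tau : 'I_n -> pauli) :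
  mulO (mulO (pauli_at C q P) (tens C tau)) (pauli_at C q P) =
  fun x y => (if comm_pt P (tau q) then 1 else -1) * tens C tau x y.
Proof.
have e1 : pauli_at C q P = tensG (fun j => pmat C (if j == q then P else PI)) by [].
have e2 : tens C tau = tensG (fun j => pmat C (tau j)) by [].
rewrite e1 e2 !mulO_tensG.
apply: functional_extensionality => x; apply: functional_extensionality => y.
rewrite /tensG.
under eq_bigr => j _ do rewrite m2_pauli.
rewrite big_split /=; congr (_ * _).
rewrite (bigD1 q) //= eqxx big1 ?mulr1 // => j /negbTE -> //.
Qed.

Lemma cyc (C : numClosedFieldType) n (P A T : op C n) :
  trO (mulO (mulO (mulO P A) P) T) = trO (mulO A (mulO (mulO P T) P)).
Proof.
by rewrite mulOA trO_comm -mulOA trO_comm.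
Qed.

Definition cfac {C : numClosedFieldType} (p : C) (P : pauli) : C :=
  if nonid P then 1 - 4%:R / 3%:R * p else 1.

Lemma tr_depol1 (C : numClosedFieldType) n (p : C) (q : 'I_n) (A : op C n) tau :
  trO (mulO (depol1 p q A) (tens C tau)) = cfac p (tau q) * trO (mulO A (tens C tau)).
Proof.
rewrite /depol1 trO_lin !cyc !conjP !trO_scale.
case: (tau q); rewrite /cfac /=; field; by [].
Qed.

Lemma tr_depol_seq (C : numClosedFieldType) n (p : C) (s : seq 'I_n) (A : op C n) tau :
  trO (mulO (foldr (depol1 p) A s) (tens C tau)) =
  (\prod_(i <- s) cfac p (tau i)) * trO (mulO A (tens C tau)).
Proof.
elim: s => [|i s IH] /=; first by rewrite big_nil mul1r.
by rewrite tr_depol1 IH big_cons mulrA.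
Qed.

Lemma tr_depol_all (C : numClosedFieldType) n (p : C) (A : op C n) tau :
  trO (mulO (depol_all p A) (tens C tau)) =
  (1 - 4%:R / 3%:R * p) ^+ #|[pred i : 'I_n | nonid (tau i)]| * trO (mulO A (tens C tau)).
Proof.
rewrite /depol_all tr_depol_seq; congr (_ * _).
rewrite big_enum /= (bigID (fun i => nonid (tau i))) /=.
rewrite [X in _ * X]big1 ?mulr1; last by move=> i /negbTE; rewrite /cfac => ->.
rewrite -prodr_const; apply: eq_bigr => i; by rewrite /cfac => ->.
Qed.

Definition diag {C : numClosedFieldType} {n : nat} (d : basis n -> C) : op C n :=
  fun x y => (x == y)%:R * d x.

Lemma mulO_diag (C : numClosedFieldType) (n : nat) (d1 d2 : basis n -> C) :
  mulO (diag d1) (diag d2) = diag (fun x => d1 x * d2 x).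
Proof.
apply: functional_extensionality => x; apply: functional_extensionality => z.
rewrite /mulO /diag (bigD1 x) //= big1 ?addr0; last first.
  by move=> y /negbTE; rewrite eq_sym => ->; rewrite !mul0r.
by rewrite eqxx mul1r mulrCA.
Qed.

Lemma idO_diag (C : numClosedFieldType) (n : nat) : (@idO C n) = diag (fun _ => 1).
Proof.
apply: functional_extensionality => x; apply: functional_extensionality => z.
by rewrite /idO /diag mulr1.
Qed.

Lemma big_diag (C : numClosedFieldType) (n : nat) (I : Type) (r : seq I) (P : pred I)
  (F : I -> basis n -> C) :
  \big[@mulO C n/@idO C n]_(i <- r | P i) diag (F i) = diag (fun x => \prod_(i <- r | P i) F i x).
Proof.
elim: r => [|i r IH].
  rewrite big_nil idO_diag; congr diag; apply: functional_extensionality => x.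
  by rewrite big_nil.
rewrite big_cons IH; case hP: (P i).
  rewrite mulO_diag; congr diag; apply: functional_extensionality => x.
  by rewrite big_cons hP.
congr diag; apply: functional_extensionality => x.
by rewrite big_cons hP.
Qed.

Definition sgnE {C : numClosedFieldType} {n : nat} (e : rel 'I_n) (x : basis n) : C :=
  \prod_(a < n) \prod_(b < n | (a < b)%N && e a b) (if x a && x b then -1 else 1).

Lemma graph_state_eq (C : numClosedFieldType) (n : nat) (e : rel 'I_n) :
  graph_state C e = fun x => sgnE e x * (sqrtC 2)^-1 ^+ n.
Proof.
apply: functional_extensionality => x.
rewrite /graph_state.
have h1 : forall i : 'I_n, \big[@mulO C n/@idO C n]_(j < n | (i < j)%N && e i j) cz C i j =
   diag (fun x : basis n => \prod_(j < n | (i < j)%N && e i j) (if x i && x j then -1 else 1)).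
  move=> i; rewrite -(big_diag C n _ _ _ (fun j (x : basis n) => if x i && x j then -1 else 1)).
  by apply: eq_bigr.
rewrite (eq_bigr _ (fun i _ => h1 i)) big_diag /applyO /diag /plus_state.
rewrite (bigD1 x) //= [X in _ + X]big1 ?addr0; last by move=> y /negbTE; rewrite eq_sym => ->; rewrite !mul0r.
by rewrite eqxx mul1r.
Qed.

Definition flip {n : nat} (x : basis n) (i : 'I_n) : basis n :=
  [ffun j => if j == i then ~~ x j else x j].

Lemma gen_off (C : numClosedFieldType) (n : nat) (e : rel 'I_n) i (x y : basis n) :
  y != flip x i -> gen C e i x y = 0.
Proof.
move=> hy.
case/boolP: [exists j, y j != flip x i j] => [/existsP [j hj] | /existsPn h]; last first.
  case/negP: hy; apply/eqP/ffunP => j; move: (h j); by rewrite negbK => /eqP.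
rewrite /gen /tens (bigD1 j) //=.
suff -> : pmat C (if j == i then PX else if e i j then PZ else PI) (x j) (y j) = 0 by rewrite mul0r.
move: hj; rewrite ffunE; case: (j =P i) => [->|_] /=.
  by case: (x i); case: (y i).
by case: (e i j); case: (x j); case: (y j).
Qed.

Lemma gen_on (C : numClosedFieldType) (n : nat) (e : rel 'I_n) (e_irr : irreflexive e) i (x : basis n) :
  gen C e i x (flip x i) = \prod_(j < n) (if e i j && x j then -1 else 1).
Proof.
rewrite /gen /tens; apply: eq_bigr => j _; rewrite ffunE; case: (j =P i) => [->|_] /=.
  by rewrite e_irr; case: (x i).
by case: (e i j); case: (x j).
Qed.

Lemma sgn_flip (C : numClosedFieldType) (n : nat) (e : rel 'I_n) (e_sym : symmetric e)
  (e_irr : irreflexive e) i (x : basis n) :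
  (sgnE e (flip x i) : C) = sgnE e x * \prod_(j < n) (if e i j && x j then -1 else 1).
Proof.
have step : forall a b : 'I_n, (a < b)%N ->
  (if flip x i a && flip x i b then -1 else 1 : C) = (if x a && x b then -1 else 1) *
   ((if (a == i) && x b then -1 else 1) * (if (b == i) && x a then -1 else 1)).
  move=> a b hab; rewrite !ffunE; case: (a =P i) => [ea|na]; case: (b =P i) => [eb|nb] /=.
  - by move: hab; rewrite ea eb ltnn.
  - by case: (x a); case: (x b) => /=; ring.
  - by case: (x a); case: (x b) => /=; ring.
  - by case: (x a); case: (x b) => /=; ring.
rewrite /sgnE.
rewrite (eq_bigr (fun a : 'I_n => \prod_(b < n | (a < b)%N && e a b)
   ((if x a && x b then -1 else 1) * ((if (a == i) && x b then -1 else 1) *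
      (if (b == i) && x a then -1 else 1))))); last first.
  by move=> a _; apply: eq_bigr => b /andP [hab _]; exact: step.
under eq_bigr do rewrite big_split.
rewrite big_split /=; congr (_ * _).
under eq_bigr do rewrite big_split.
rewrite big_split /=.
have T1 : \prod_(a < n) \prod_(b < n | (a < b)%N && e a b)
        (if (a == i) && x b then -1 else 1) =
      \prod_(b < n) (if (i < b)%N && e i b then (if x b then -1 else 1) else 1) :> C.
  rewrite (bigD1 i) //= [X in _ * X]big1 ?mulr1; last first.
    by move=> a /negbTE na; apply: big1 => b _; rewrite na.
  rewrite big_mkcond; apply: eq_bigr => b _; by rewrite eqxx.
have T2 : \prod_(a < n) \prod_(b < n | (a < b)%N && e a b)
        (if (b == i) && x a then -1 else 1) =
      \prod_(a < n) (if (a < i)%N && e a i then (if x a then -1 else 1) else 1) :> C.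
  under eq_bigr do rewrite big_mkcond.
  rewrite exchange_big /= (bigD1 i) //= [X in _ * X]big1 ?mulr1; last first.
    by move=> b /negbTE nb; apply: big1 => a _; rewrite nb; case: ifP.
  by apply: eq_bigr => a _; rewrite eqxx.
rewrite T1 T2 -big_split; apply: eq_bigr => b _ /=.
rewrite (e_sym b i); case: (ltngtP i b) => h /=.
- by rewrite mulr1; case: (e i b).
- by rewrite mul1r; case: (e i b).
- by move/val_inj: h => h; subst b; rewrite e_irr mulr1.
Qed.

Lemma gen_sum (C : numClosedFieldType) (n : nat) (e : rel 'I_n) (e_sym : symmetric e)
  (e_irr : irreflexive e) i (x : basis n) :
  \sum_(y : basis n) gen C e i x y * sgnE e y = sgnE e x.
Proof.
rewrite (bigD1 (flip x i)) //= big1 ?addr0; last by move=> y hy; rewrite gen_off ?mul0r.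
rewrite gen_on // sgn_flip // mulrCA -big_split /= big1 ?mulr1 // => j _.
by case: (e i j && x j); rewrite ?mulrNN mulr1.
Qed.

Lemma applyO_mulO (C : numClosedFieldType) (n : nat) (A B : op C n) (v : vec C n) :
  applyO (mulO A B) v = applyO A (applyO B v).
Proof.
apply: functional_extensionality => x; rewrite /applyO /mulO.
under eq_bigr do rewrite mulr_suml.
rewrite exchange_big /=; apply: eq_bigr => w _.
rewrite mulr_sumr; apply: eq_bigr => y _; by rewrite mulrA.
Qed.

Lemma applyO_idO (C : numClosedFieldType) (n : nat) (v : vec C n) :
  applyO (@idO C n) v = v.
Proof.
apply: functional_extensionality => x; rewrite /applyO /idO.
rewrite (bigD1 x) //= big1 ?addr0; last by move=> y /negbTE; rewrite eq_sym => ->; rewrite mul0r.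
by rewrite eqxx mul1r.
Qed.

Lemma stab_fix (C : numClosedFieldType) (n : nat) (e : rel 'I_n) (e_sym : symmetric e)
  (e_irr : irreflexive e) (l : 'I_n -> bool) :
  applyO (stab C e l) (graph_state C e) = graph_state C e.
Proof.
rewrite /stab; apply: (big_ind (fun A => applyO A (graph_state C e) = graph_state C e)).
- exact: applyO_idO.
- by move=> A B hA hB; rewrite applyO_mulO hB hA.
move=> i _; case: (l i); last exact: applyO_idO.
rewrite graph_state_eq; apply: functional_extensionality => x; rewrite /applyO.
under eq_bigr do rewrite mulrA.
by rewrite -mulr_suml gen_sum.
Qed.

Lemma tr_proj (C : numClosedFieldType) (n : nat) (v : vec C n) (S : op C n) :
  applyO S v = v -> trO (mulO (proj v) S) = \sum_x v x * (v x)^*.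
Proof.
move=> hv; rewrite /trO /mulO /proj exchange_big /=; apply: eq_bigr => y _.
have e1 : \sum_x v x * (v y)^* * S y x = (v y)^* * applyO S v y.
  by rewrite /applyO mulr_sumr; apply: eq_bigr => x _; ring.
by rewrite e1 hv mulrC.
Qed.

Lemma sgnE_pm (C : numClosedFieldType) (n : nat) (e : rel 'I_n) (x : basis n) :
  (sgnE e x : C) = 1 \/ (sgnE e x : C) = -1.
Proof.
have hm : forall a b : C, (a = 1 \/ a = -1) -> (b = 1 \/ b = -1) -> (a * b = 1 \/ a * b = -1).
  move=> a b [->|->] [->|->]; rewrite ?mulrNN ?mul1r ?mulr1; by [left|right].
rewrite /sgnE; apply: (big_ind (fun z : C => z = 1 \/ z = -1)) => //; first by left.
move=> a _; apply: (big_ind (fun z : C => z = 1 \/ z = -1)) => //; first by left.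
by move=> b _; case: ifP; [right|left].
Qed.

Lemma norm1 (C : numClosedFieldType) (n : nat) (e : rel 'I_n) :
  \sum_x graph_state C e x * (graph_state C e x)^* = 1.
Proof.
rewrite graph_state_eq.
have hc : ((sqrtC 2)^-1 : C)^* = (sqrtC 2)^-1.
  by rewrite fmorphV /= conj_Creal // ger0_real // sqrtC_ge0 ler0n.
have hs : forall x, (sgnE e x : C) * (sgnE e x)^* = 1.
  move=> x; case: (sgnE_pm C n e x) => ->; first by rewrite rmorph1 mulr1.
  by rewrite rmorphN1 mulrNN mulr1.
under eq_bigr => x _ do rewrite rmorphM /= rmorphXn /= hc mulrACA hs mul1r.
rewrite sumr_const card_ffun card_bool card_ord -exprMn -invfM -expr2 sqrtCK.
by rewrite -[X in X = 1]mulr_natr natrX -exprMn mulVf ?expr1n // pnatr_eq0.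
Qed.
Lemma bern {R : numFieldType} (q : R) (m : nat) : 0 <= q -> q <= 1 ->
  (1 - q) ^+ m * (1 + m%:R * q) <= 1.
Proof.
move=> q0 q1; elim: m => [|m IH]; first by rewrite expr0 mul0r addr0 mul1r.
have e : (1 - q) ^+ m.+1 * (1 + m.+1%:R * q) =
   (1 - q) ^+ m * (1 + m%:R * q) - (1 - q) ^+ m * (m.+1%:R * q ^+ 2).
  by rewrite exprS -natr1; ring.
rewrite e; apply: le_trans IH; rewrite gerBl mulr_ge0 //.
  by rewrite exprn_ge0 // subr_ge0.
by rewrite mulr_ge0 // exprn_ge0.
Qed.

Lemma lerX (R : numFieldType) (n : nat) (x y : R) : 0 <= x -> x <= y -> x ^+ n <= y ^+ n.
Proof.
move=> x0 xy; elim: n => [|n IH]; first by rewrite !expr0.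
by rewrite !exprS ler_pM // exprn_ge0.
Qed.

Lemma ineq (R : numFieldType) (k : nat) (hk : (0 < k)%N) (p : R)
  (hp0 : 0 <= p) (hp1 : p <= 3%:R / 4%:R) :
  0 <= (1 - p) ^+ (4 * k) - (1 - 4%:R / 3%:R * p) ^+ (3 * k) /\
  (1 - p) ^+ (4 * k) - (1 - 4%:R / 3%:R * p) ^+ (3 * k) < 2%:R / (3 * k)%:R.
Proof.
case: k hk => // m _.
have c0 : forall a b : nat, (0 < b)%N -> (0 : R) <= a%:R / b%:R.
  by move=> a b _; rewrite divr_ge0 // ler0n.
have c1 : forall a b : nat, (0 < a)%N -> (0 < b)%N -> (0 : R) < a%:R / b%:R.
  by move=> a b ha hb; rewrite divr_gt0 // ltr0n.
set a := 1 - p; set b := 1 - 4%:R / 3%:R * p.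
set u := a ^+ 4; set v := b ^+ 3.
have hb : 0 <= b.
  have -> : b = (3%:R / 4%:R - p) * (4%:R / 3%:R) by rewrite /b; field.
  by rewrite mulr_ge0 ?c0 // subr_ge0.
have ha : 0 < a.
  have -> : a = (3%:R / 4%:R - p) + 1%:R / 4%:R by rewrite /a; field.
  by rewrite ltr_wpDl ?c1 // subr_ge0.
have preal : p \is Num.real by rewrite ger0_real.
have huv : u - v = p ^+ 2 * ((p - 22%:R / 27%:R) ^+ 2 + 2%:R / 729%:R).
  by rewrite /u /v /a /b; field.
have hvu : v <= u.
  rewrite -subr_ge0 huv mulr_ge0 //; first by rewrite -realEsqr.
  rewrite addr_ge0 ?c0 // -realEsqr rpredB // ?rpredM ?rpredV ?rpred_nat //.
have hv : 0 <= v by rewrite exprn_ge0.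
have hu : 0 <= u by apply: le_trans hvu.
have hv' : v \is Num.nneg by rewrite nnegrE.
have hu' : u \is Num.nneg by rewrite nnegrE.
have eA : (1 - p) ^+ (4 * m.+1) = u ^+ m.+1 by rewrite exprM.
have eB : (1 - 4%:R / 3%:R * p) ^+ (3 * m.+1) = v ^+ m.+1 by rewrite exprM.
rewrite eA eB; split.
  by rewrite subr_ge0 lerX.
have huv2 : u - v <= 2%:R / 3%:R * p ^+ 2.
  rewrite -subr_ge0.
  have -> : 2%:R / 3%:R * p ^+ 2 - (u - v) =
     p ^+ 2 * p * ((3%:R / 4%:R - p) + 95%:R / 108%:R) by rewrite huv; field.
  by rewrite !mulr_ge0 ?exprn_ge0 // addr_ge0 ?c0 // subr_ge0.
have hsum : \sum_(i < m.+1) u ^+ (m.+1.-1 - i) * v ^+ i <= m.+1%:R * u ^+ m.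
  have -> : m.+1%:R * u ^+ m = \sum_(i < m.+1) u ^+ m.
    by rewrite sumr_const card_ord mulr_natl.
  apply: ler_sum => i _.
  have hi : (i <= m)%N by rewrite -ltnS.
  have -> : u ^+ m = u ^+ (m - i) * u ^+ i by rewrite -exprD subnK.
  rewrite /=; apply: ler_wpM2l; first by rewrite exprn_ge0 // exprn_ge0 // ltW.
  exact: lerX.
set w := a ^+ (2 * m).
have hw : 0 < w by rewrite exprn_gt0.
have uw : u ^+ m = w ^+ 2.
  by rewrite /u /w -!exprM mulnAC.
have hz : m.+1%:R * p * w < 1.
  have hp1' : p <= 1.
    apply: (le_trans hp1). by rewrite ler_pdivrMr ?ltr0n // mul1r ler_nat.
  have hb2 := bern p (2 * m) hp0 hp1'.
  apply: lt_le_trans hb2.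
  rewrite mulrC ltr_pM2l // -subr_gt0.
  have -> : 1 + (2 * m)%:R * p - m.+1%:R * p = a + m%:R * p.
    by rewrite /a natrM -natr1; ring.
  by rewrite ltr_wpDr // mulr_ge0 // ler0n.
rewrite subrXX.
apply: (le_lt_trans (y := 2%:R / 3%:R * p ^+ 2 * (m.+1%:R * u ^+ m))).
  apply: ler_pM => //; first by rewrite subr_ge0.
  by rewrite sumr_ge0 // => i _; rewrite mulr_ge0 // exprn_ge0.
set z := m.+1%:R * p * w.
have -> : 2%:R / 3%:R * p ^+ 2 * (m.+1%:R * u ^+ m) =
    2%:R / (3 * m.+1)%:R * z ^+ 2.
  rewrite uw /z natrM; field; by rewrite addrC natr1 pnatr_eq0.
have z0 : 0 <= z by rewrite !mulr_ge0 ?ler0n // ltW.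
rewrite gtr_pMr ?c1 ?muln_gt0 //.
by rewrite expr_lt1.
Qed.

Theorem theorem1 (C : numClosedFieldType) (k : nat) (hk : (0 < k)%N)
  (e : rel 'I_(4 * k)) (e_sym : symmetric e) (e_irr : irreflexive e)
  (no_isolated : forall i : 'I_(4 * k), exists j, e i j)
  (A_nonempty : exists S : op C (4 * k), in_A e (3 * k) S)
  (p : C) (hp0 : 0 <= p) (hp1 : p <= 3%:R / 4%:R)
  (S : op C (4 * k)) (hS : in_A e (3 * k) S) :
  let F_est := trO (mulO (noisy_state e p) S) in
  let F_tilde := (1 - p) ^+ (4 * k) in
  F_est = (1 - 4%:R / 3%:R * p) ^+ (3 * k) /\
  0 <= F_tilde - F_est /\ F_tilde - F_est < 2%:R / (3 * k)%:R.
Proof.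
move=> F_est F_tilde.
case: hS => [[l hl] [s [tau [hST hcnt]]]].
have hP1 : trO (mulO (proj (graph_state C e)) S) = 1.
  rewrite (tr_proj C (4 * k) (graph_state C e) S) ?norm1 // hl; exact: stab_fix.
have hF : F_est = (1 - 4%:R / 3%:R * p) ^+ (3 * k).
  move: hP1; rewrite /F_est /noisy_state hST !trO_scale tr_depol_all hcnt => hP1.
  by rewrite mulrCA hP1 mulr1.
split; first exact: hF.
rewrite /F_tilde hF; exact: ineq.
Qed.
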